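(* (a) Let $(Q,\cdot)$ be a Ward quasigroup with $xx=e$ for all $x$. Put $x\star y=(e\cdot x)\cdot y$ and then $x\bullet y=(e\star x)\star y$. Then $x\bullet y=x\cdot y$ for all $x,y\in Q$. (b) Let $(Q,\star,e)$ be a double Ward quasigroup. Put $x\bullet y=(e\star x)\star y$ and then $x\diamond y=(e\bullet x)\bullet y$. Then $x\diamond y=x\star y$ for all $x,y\in Q$.
   Context: A quasigroup is a magma in which $ax=b$ and $ya=b$ have unique solutions for all $a,b$. A Ward quasigroup is a quasigroup satisfying $(xz)(yz)=xy$ for all $x,y,z$; it has an element $e$ with $xx=e$ for all $x$. A double Ward quasigroup $(Q,\star,e)$ is a quasigroup with an element $e$ such that $((e\star e)\star(x\star z))\star((e\star y)\star z)=x\star y$ for all $x,y,z$. *)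

(* Defs.v *)
Definition is_quasigroup {Q : Type} (op : Q -> Q -> Q) : Prop :=
  (forall a b : Q, exists! x : Q, op a x = b) /\
  (forall a b : Q, exists! y : Q, op y a = b).

Definition is_ward_quasigroup {Q : Type} (op : Q -> Q -> Q) : Prop :=
  is_quasigroup op /\
  (forall x y z : Q, op (op x z) (op y z) = op x y).

Definition is_double_ward_quasigroup {Q : Type} (star : Q -> Q -> Q) (e : Q) : Prop :=
  is_quasigroup star /\
  (forall x y z : Q,
     star (star (star e e) (star x z)) (star (star e y) z) = star x y).

(* Main.v *)
Require Import Defs.

Lemma lcanc {Q} (op : Q -> Q -> Q) : is_quasigroup op ->
  forall a x y, op a x = op a y -> x = y.
Proof.
  intros [H1 _] a x y E. destruct (H1 a (op a x)) as [u [_ Hu]].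
  rewrite <- (Hu x eq_refl). apply Hu. symmetry; exact E.
Qed.

Lemma rcanc {Q} (op : Q -> Q -> Q) : is_quasigroup op ->
  forall a x y, op x a = op y a -> x = y.
Proof.
  intros [_ H2] a x y E. destruct (H2 a (op x a)) as [u [_ Hu]].
  rewrite <- (Hu x eq_refl). apply Hu. symmetry; exact E.
Qed.

Lemma lsol {Q} (op : Q -> Q -> Q) : is_quasigroup op ->
  forall a b, exists x, op a x = b.
Proof. intros [H1 _] a b. destruct (H1 a b) as [u [Hu _]]. eauto. Qed.

Lemma rsol {Q} (op : Q -> Q -> Q) : is_quasigroup op ->
  forall a b, exists x, op x a = b.
Proof. intros [_ H2] a b. destruct (H2 a b) as [u [Hu _]]. eauto. Qed.

Theorem theorem4p4 :
  (forall (Q : Type) (dot : Q -> Q -> Q) (e : Q),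
     is_ward_quasigroup dot ->
     (forall x : Q, dot x x = e) ->
     let star := fun x y => dot (dot e x) y in
     let bullet := fun x y => star (star e x) y in
     forall x y : Q, bullet x y = dot x y)
  /\
  (forall (Q : Type) (star : Q -> Q -> Q) (e : Q),
     is_double_ward_quasigroup star e ->
     let bullet := fun x y => star (star e x) y in
     let diamond := fun x y => bullet (bullet e x) y in
     forall x y : Q, diamond x y = star x y).
Proof.
  split.
  - intros Q dot e [Hq W] Hsq star bullet x y.
    unfold bullet, star. rewrite Hsq.
    destruct (lsol dot Hq x x) as [t Ht].
    assert (E1 : forall y z, dot e (dot y z) = dot z y).
    { intros a b. rewrite <- (Hsq b). apply W. }
    assert (dot e (dot e x) = x) as ->.
    { rewrite <- Ht. rewrite (E1 x t). rewrite (E1 t x). reflexivity. }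
    reflexivity.
  - intros Q op e [Hq W] bullet diamond x y.
    unfold diamond, bullet.
    set (f := op e e).
    destruct (lsol op Hq e e) as [y0 Hy0].
    assert (LI : forall a b, op a b = e -> op e b = a).
    { intros a b Hab.
      destruct (lsol op Hq e (op a e)) as [w Hw].
      pose proof (W e y0 w) as W1. rewrite Hy0, Hw in W1.
      pose proof (W a b e) as W2. rewrite Hab in W2.
      fold f in W1, W2. pose proof (eq_trans W2 (eq_sym W1)) as W3.
      apply (lcanc op Hq) in W3.
      apply (rcanc op Hq) in W3. exact W3. }
    assert (Hf : f = e).
    { pose proof (W e y0 e) as W1. rewrite Hy0 in W1. fold f in W1.
      apply LI in W1. symmetry. apply (rcanc op Hq f). exact W1. }
    change (op e e) with f. rewrite Hf.
    f_equal.
    destruct (rsol op Hq x e) as [a Ha].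
    pose proof (LI a x Ha) as Hex.
    assert (K : op (op e x) e = x).
    { pose proof (W e x e) as W1. fold f in W1. rewrite Hf in W1.
      change (op e e) with f in W1. rewrite Hf in W1.
      apply (lcanc op Hq) in W1. exact W1. }
    pose proof (W a e x) as W2. rewrite Ha in W2. fold f in W2.
    rewrite Hf in W2. change (op e e) with f in W2. rewrite Hf in W2.
    rewrite W2. rewrite <- Hex. exact K.
Qed.
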